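(* Let $N\ge2$, $T>0$, and consider the problem of minimizing $\mathbb V(T)=\frac1N\sum_{i=1}^N\xi_i(T)^2$ over $\alpha\in\mathcal U$, where $\dot\xi_i=-\xi_i+(1-\alpha_i)\bar\xi$, $\bar\xi=\frac1N\sum_j\xi_j$, with initial datum satisfying $\bar\xi(0)>0$ and $\xi_1(0)\ge\dots\ge\xi_N(0)$. Let $\bar\xi_{1,N-1}=\frac1{N-1}\sum_{i=1}^{N-1}\xi_i$ and $$t_N=\frac{N}{N-1}\ln\Big(\frac{(N-1)^2}{N}\,\frac{\bar\xi_{1,N-1}(0)-\xi_N(0)}{\bar\xi(0)}+1\Big).$$ If $T\ge t_N$, then every optimal control of this problem belongs to $\mathcal U_{FS}$, and its trajectory satisfies $\xi_i(T)=\bar\xi(T)$ for every $i\in\{1,\dots,N\}$.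
   Context: $\mathcal U$ is the set of measurable $\alpha:[0,T]\to[0,1]^N$ with $\sum_i\alpha_i(t)\le1$ for all $t$; $\mathcal U_{FS}\subset\mathcal U$ is the subset with $\sum_i\alpha_i(t)=1$ for all $t$. *)

(* Defs.v *)
From HB Require Import structures.
From mathcomp Require Import all_boot all_order all_algebra.
From mathcomp Require Import all_classical all_reals all_analysis.
Set Implicit Arguments. Unset Strict Implicit. Unset Printing Implicit Defensive.
Import Order.TTheory GRing.Theory Num.Theory.
Import numFieldNormedType.Exports.
Local Open Scope classical_set_scope.
Local Open Scope ring_scope.

Section Defs.
Context {R : realType}.

(* Agents are indexed by 0, ..., N-1 (paper: 1, ..., N). *)

Definition avg (N : nat) (x : nat -> R) : R := (N%:R)^-1 * \sum_(i < N) x i.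

Definition cost (N : nat) (x : nat -> R) : R := (N%:R)^-1 * \sum_(i < N) x i ^+ 2.

Definition admissible (N : nat) (T : R) (a : nat -> R -> R) : Prop :=
  (forall i, (i < N)%N -> measurable_fun `[0, T] (a i)) /\
  (forall t, 0 <= t <= T ->
     (forall i, (i < N)%N -> 0 <= a i t <= 1) /\ \sum_(i < N) a i t <= 1).

Definition full_saturation (N : nat) (T : R) (a : nat -> R -> R) : Prop :=
  {ae (@lebesgue_measure R), forall t, 0 <= t <= T -> \sum_(i < N) a i t = 1}.

Definition rhs (N : nat) (a : nat -> R -> R) (x : nat -> R -> R) (i : nat) (s : R) : R :=
  - x i s + (1 - a i s) * avg N (fun j => x j s).

Definition is_traj (N : nat) (T : R) (x0 : nat -> R) (a : nat -> R -> R)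
  (x : nat -> R -> R) : Prop :=
  forall i, (i < N)%N ->
    forall t, 0 <= t <= T ->
      (@lebesgue_measure R).-integrable `[0, t] (fun s => (rhs N a x i s)%:E) /\
      x i t = x0 i + Rintegral (@lebesgue_measure R) `[0, t] (rhs N a x i).

Definition optimal (N : nat) (T : R) (x0 : nat -> R) (a : nat -> R -> R)
  (x : nat -> R -> R) : Prop :=
  admissible N T a /\ is_traj N T x0 a x /\
  forall b y, admissible N T b -> is_traj N T x0 b y ->
    cost N (fun i => x i T) <= cost N (fun i => y i T).

Definition tN (N : nat) (x0 : nat -> R) : R :=
  (N%:R / (N.-1)%:R) *
  ln (((N.-1)%:R ^+ 2 / N%:R) * ((avg N.-1 x0 - x0 N.-1) / avg N x0) + 1).

End Defs.

(* Main.v *)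
Require Import Defs.
From mathcomp Require Import all_boot all_order all_algebra.
From mathcomp Require Import all_classical all_reals all_analysis.
Import Order.TTheory GRing.Theory Num.Theory.
From HB Require Import structures.
From mathcomp Require Import ring lra.
Local Open Scope ring_scope.

Module Aux.
Set Implicit Arguments. Unset Strict Implicit. Unset Printing Implicit Defensive.
Import Order.TTheory GRing.Theory Num.Theory.
Import numFieldNormedType.Exports.
Local Open Scope classical_set_scope.
Local Open Scope ring_scope.

Section S.
Context {R : realType}.
Notation mu := (@lebesgue_measure R).

Lemma expk_derive (k x : R) : is_derive x 1 (fun s : R => expR (k * s)) (expR (k * x) * k).
Proof.
have -> : (fun s : R => expR (k * s)) = expR \o ( *%R k) by [].
apply: is_derive1_comp.
rewrite -[k in is_derive _ _ _ k]mulr1.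
exact: is_deriveZ.
Qed.

Lemma expk_cont (k : R) : continuous (fun s : R => expR (k * s)).
Proof.
move=> x; apply: continuous_comp; last exact: continuous_expR.
by apply: continuousM; [exact: cvg_cst|exact: cvg_id].
Qed.

Lemma expk_int (k t : R) : 0 <= t ->
  mu.-integrable `[0, t] (EFin \o (fun s => expR (k * s))).
Proof.
move=> t0; apply: continuous_compact_integrable; first exact: segment_compact.
apply: continuous_subspaceT; exact: expk_cont.
Qed.

Lemma expk_RI (k t : R) : k != 0 -> 0 <= t ->
  \int[mu]_(s in `[0, t]) expR (k * s) = (expR (k * t) - 1) / k.
Proof.
move=> k0; rewrite le_eqVlt => /predU1P[<-|t0].
  by rewrite set_itv1 Rintegral_set1 mulr0 expR0 subrr mul0r.
rewrite /Rintegral (@continuous_FTC2 _ _ (fun s => expR (k * s) / k)) //.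
- by rewrite /= mulr0 expR0 -mulrBl.
- by apply: continuous_subspaceT; exact: expk_cont.
- split.
  + move=> x _; apply: derivableM; first by case: (expk_derive k x).
    exact: derivable_cst.
  + by apply: cvg_at_right_filter; apply: cvgM; [exact: expk_cont|exact: cvg_cst].
  + by apply: cvg_at_left_filter; apply: cvgM; [exact: expk_cont|exact: cvg_cst].
- move=> x _; rewrite derive1E.
  have H := is_deriveZ (k^-1) (expk_derive k x).
  have -> : (fun s => expR (k * s) / k) = k^-1 \*: (fun s => expR (k * s)).
    by apply/funext => s /=; rewrite mulrC.
  rewrite (@derive_val _ _ _ _ _ _ _ H).
  by rewrite /GRing.scale /= mulrCA mulVf // mulr1.
Qed.


Lemma within_cont_pt (f : R -> R) a b x e : {within `[a, b], continuous f} ->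
  a <= x <= b -> 0 < e ->
  exists2 d, 0 < d & forall y, a <= y <= b -> `|x - y| < d -> `|f x - f y| < e.
Proof.
move=> /subspace_continuousP H xab e0.
have := H x; rewrite /= in_itv /= xab => /(_ isT) /cvgrPdist_lt /(_ e e0).
rewrite near_withinE => /nbhs_ballP [d d0 Hd].
exists d => // y yab xy; apply: Hd; last by rewrite /= in_itv /= yab.
by rewrite /ball /=.
Qed.

Lemma key (phi c : R -> R) (T g0 s0 : R) :
  mu.-integrable `[0, T] (EFin \o phi) ->
  (forall s, 0 <= s <= T -> 0 <= c s) ->
  (forall s, 0 <= s <= T -> - c s * (g0 + \int[mu]_(u in `[0, s]) phi u) <= phi s) ->
  0 <= s0 -> s0 <= T -> 0 <= g0 + \int[mu]_(u in `[0, s0]) phi u ->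
  forall t, s0 <= t <= T -> 0 <= g0 + \int[mu]_(u in `[0, t]) phi u.
Proof.
move=> iphi c0 hphi s00 s0T gs0 t /andP[s0t tT].
set g := fun t => g0 + \int[mu]_(u in `[0, t]) phi u.
rewrite -/(g s0) in gs0; rewrite -/(g t).
rewrite leNgt; apply/negP => gt1.
pose A := [set u | s0 <= u <= t /\ 0 <= g u].
have As0 : A s0 by split => //; rewrite lexx s0t.
have hsA : has_sup A.
  split; first by exists s0.
  by exists t => u [/andP[_ ->] _].
set u0 := sup A.
have s0u0 : s0 <= u0 by apply: sup_upper_bound.
have u0t : u0 <= t by apply: ge_sup; [exists s0|move=> u [/andP[_ ->] _]].
have T0 : 0 <= T by apply: le_trans s0T.
have gu0 : 0 <= g u0.
  rewrite leNgt; apply/negP => gu0n.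
  have gc := parameterized_integral_continuous T0 iphi.
  have u0ab : 0 <= u0 <= T by rewrite (le_trans s00 s0u0) (le_trans u0t tT).
  have e0 : 0 < - g u0 by rewrite oppr_gt0.
  have [d d0 Hd] := within_cont_pt gc u0ab e0.
  have [u Au ud] := sup_adherent d0 hsA.
  have uu0 : u <= u0 := sup_upper_bound hsA Au.
  move: Au; rewrite /A /= => -[/andP[s0u ut] gu].
  have : `|parameterized_integral mu 0 u0 phi - parameterized_integral mu 0 u phi| < - g u0.
    apply: Hd; first by rewrite (le_trans s00 s0u) (le_trans ut tT).
    by rewrite ger0_norm ?subr_ge0 // ltrBlDr -ltrBlDl.
  rewrite /parameterized_integral /g in gu gu0n *.
  move=> H; have := ler_norm (\int[mu]_(t0 in `[0, u]) phi t0 - \int[mu]_(t0 in `[0, u0]) phi t0).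
  rewrite distrC.
  move: H gu gu0n.
  move: (\int[mu]_(t0 in `[0, u]) phi t0) (\int[mu]_(t0 in `[0, u0]) phi t0) => I1 I0.
  move: (`|I0 - I1|) => n. move=> *; lra.
have u0lt : u0 < t.
  rewrite lt_neqAle u0t andbT; apply/eqP => E; move: gu0; rewrite E; lra.
have gneg : forall v, u0 < v <= t -> g v < 0.
  move=> v /andP[u0v vt]; rewrite ltNge; apply/negP => gv.
  have Av : A v by split => //; rewrite vt (le_trans s0u0 (ltW u0v)).
  have : v <= u0 := sup_upper_bound hsA Av.
  by rewrite leNgt u0v.
have itf : mu.-integrable `[0, t] (EFin \o phi).
  apply: integrableS iphi => //; apply: subset_itvl; by rewrite bnd_simp.
have E := Rintegral_itvB itf (a:=BLeft 0) (b:=BRight t) (x:=u0).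
have H : 0 <= \int[mu]_(v in `]u0, t]) phi v.
  apply: Rintegral_ge0 => v; rewrite /= in_itv /= => /andP[u0v vt].
  have vT : 0 <= v <= T by rewrite (le_trans (le_trans s00 s0u0) (ltW u0v)) (le_trans vt tT).
  apply: le_trans (hphi v vT).
  rewrite mulNr oppr_ge0 -/(g v); apply: mulr_ge0_le0; first exact: c0.
  by apply: ltW; apply: gneg; rewrite u0v vt.
move: E; rewrite !bnd_simp (le_trans s00 s0u0) ltW // => /(_ isT isT) E.
move: gt1 gu0 H E; rewrite /g.
move: (\int[mu]_(x in `[0, t]) phi x) (\int[mu]_(x in `[0, u0]) phi x) (\int[mu]_(x in `]u0, t]) phi x).
move=> a b c'; clear. lra.
Qed.


Lemma RI_sum (t : R) (n : nat) (f : nat -> R -> R) :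
  (forall i, (i < n)%N -> mu.-integrable `[0, t] (EFin \o f i)) ->
  mu.-integrable `[0, t] (EFin \o (fun s => \sum_(i < n) f i s)) /\
  \int[mu]_(s in `[0, t]) (\sum_(i < n) f i s) = \sum_(i < n) \int[mu]_(s in `[0, t]) f i s.
Proof.
elim: n => [_|n IH H].
  have -> : (fun s : R => \sum_(i < 0) f i s) = (fun=> 0).
    by apply/funext => s; rewrite big_ord0.
  split; last by rewrite big_ord0 Rintegral_cst //= mul0r.
  exact: integrable0.
have [IH1 IH2] := IH (fun i hi => H i (ltnW hi)).
have Hn := H n (ltnSn n).
have -> : (fun s : R => \sum_(i < n.+1) f i s) = (fun s => \sum_(i < n) f i s + f n s).
  by apply/funext => s; rewrite big_ord_recr.
split; first exact: (integrableD _ IH1 Hn).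
by rewrite RintegralD // IH2 big_ord_recr.
Qed.

Lemma RI_scale (t r : R) (f : R -> R) :
  mu.-integrable `[0, t] (EFin \o f) ->
  mu.-integrable `[0, t] (EFin \o (fun s => r * f s)) /\
  \int[mu]_(s in `[0, t]) (r * f s) = r * \int[mu]_(s in `[0, t]) f s.
Proof.
move=> H; split; last by rewrite RintegralZl.
have H2 := integrableZl _ r H.
have H3 := H2 (measurable_itv _).
move: H3; apply: eq_integrable => //.
Qed.

Lemma RI_add (t : R) (f g : R -> R) :
  mu.-integrable `[0, t] (EFin \o f) -> mu.-integrable `[0, t] (EFin \o g) ->
  mu.-integrable `[0, t] (EFin \o (fun s => f s + g s)) /\
  \int[mu]_(s in `[0, t]) (f s + g s) = \int[mu]_(s in `[0, t]) f s + \int[mu]_(s in `[0, t]) g s.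
Proof.
move=> Hf Hg; split; last by rewrite RintegralD.
exact: (integrableD _ Hf Hg).
Qed.


Lemma explicit (p : nat) (T : R) (x0 : nat -> R) :
  0 < T -> 0 < avg p.+2 x0 ->
  (forall i j, (i <= j)%N -> (j < p.+2)%N -> x0 j <= x0 i) ->
  tN p.+2 x0 <= T ->
  exists b y, admissible p.+2 T b /\ is_traj p.+2 T x0 b y /\
    cost p.+2 (fun i => y i T) = (avg p.+2 x0 * expR (- (p.+2%:R)^-1 * T)) ^+ 2.
Proof.
move=> T0 m0pos ord htN.
set n : R := (p.+2)%:R.
set q : R := (p.+1)%:R.
have nq : n = q + 1 by rewrite /n /q mulrSr.
have q0 : 0 < q by rewrite /q ltr0n.
have n0 : 0 < n by rewrite nq; lra.
have hn1 : (1 + p%:R : R) != 0 by rewrite -mulrS -/q gt_eqF.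
have hn2 : (2 + p%:R : R) != 0.
  have -> : (2 + p%:R : R) = n by rewrite nq /q mulrS; ring.
  by rewrite gt_eqF.
set m0 := avg p.+2 x0.
set xl := x0 p.+1.
set k1 : R := - n^-1.
pose E1 (t : R) : R := expR (k1 * t).
pose E2 (t : R) : R := expR (-1 * t).
have sumx : \sum_(i < p.+2) x0 i = n * m0.
  by rewrite /m0 /avg -/n mulrA mulfV ?gt_eqF // mul1r.
set M := n * (m0 - xl).
have sumM : \sum_(i < p.+2) (x0 i - xl) = M.
  rewrite sumrB sumx sumr_const card_ord /M -/n mulrBr; congr (_ - _).
  by rewrite -mulr_natl.
have xlle : forall i, (i < p.+2)%N -> xl <= x0 i.
  by move=> i hi; apply: ord => //; rewrite -ltnS.
have leM : forall i, (i < p.+2)%N -> x0 i - xl <= M.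
  move=> i hi; rewrite -sumM (bigD1 (Ordinal hi)) //= lerDl.
  by apply: sumr_ge0 => j _; rewrite subr_ge0 xlle.
have M0 : 0 <= M by rewrite -sumM; apply: sumr_ge0 => j _; rewrite subr_ge0 xlle.
set avg1 := avg p.+1 x0.
have hav1 : q * (avg1 - xl) = M.
  rewrite -sumM big_ord_recr /= subrr addr0 sumrB sumr_const card_ord.
  rewrite /avg1 /avg -/q mulrBr mulrA mulfV ?gt_eqF // mul1r -mulr_natl.
  by [].
have m00 : 0 < m0 by [].
set Q := q ^+ 2 / n * ((avg1 - xl) / m0) + 1.
have hQ : Q = q * M / (n * m0) + 1.
  rewrite /Q -hav1; field; rewrite !gt_eqF //.
have Q1 : 1 <= Q by rewrite hQ lerDr; apply: divr_ge0 => //; apply: mulr_ge0; lra.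
have lnQ : ln Q <= T * q / n.
  move: htN; rewrite /tN /= -/n -/q -/m0 -/avg1 -/xl -/Q => h.
  rewrite -(ler_pM2l (_ : 0 < n / q)) ?divr_gt0 //.
  by apply: le_trans h _; rewrite le_eqVlt; apply/orP; left; apply/eqP; field; rewrite !gt_eqF.
have QE : Q <= expR (T * q / n).
  by rewrite -(@lnK _ Q) ?ler_expR // posrE; lra.
have E12 : E1 T = expR (T * q / n) * E2 T.
  rewrite /E1 /E2 -expRD; congr expR; rewrite /k1 nq; field; rewrite gt_eqF //; lra.
set X := expR (T * q / n).
have X1 : 1 < X by rewrite pexpR_gt1 // !mulr_gt0 // invr_gt0.
set K := m0 * (n / q) * (X - 1).
have K0 : 0 < K.
  rewrite /K; apply: mulr_gt0; [apply: mulr_gt0 => //; exact: divr_gt0|lra].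
have KM : M <= K.
  have : q * M / (n * m0) <= X - 1 by move: QE; rewrite hQ lerBrDr.
  move=> h; rewrite /K.
  have -> : M = m0 * (n / q) * (q * M / (n * m0)) by field; rewrite !gt_eqF.
  by rewrite ler_pM2l //; apply: mulr_gt0 => //; exact: divr_gt0.
pose d i := x0 i - m0.
pose be i := d i / K.
have sumd : \sum_(i < p.+2) d i = 0.
  rewrite /d sumrB sumx sumr_const card_ord -mulr_natl -/n; ring.
have sumbe : \sum_(i < p.+2) be i = 0 by rewrite /be -mulr_suml sumd mul0r.
pose b (i : nat) (t : R) := n^-1 + be i.
have adm : admissible p.+2 T b.
  split; first by move=> i _; exact: measurable_cst.
  move=> t _; split; last first.
    rewrite /b big_split /= sumbe addr0 sumr_const card_ord -mulr_natl -/n.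
    by rewrite mulfV ?gt_eqF.
  move=> i hi; have := leM i hi; have := xlle i hi.
  have mx : m0 - xl = M / n by rewrite /M; field; rewrite gt_eqF.
  rewrite /b /be /d => h1 h2; apply/andP; split.
    have -> : n^-1 + (x0 i - m0) / K = (K + n * (x0 i - m0)) / (n * K).
      by field; rewrite !gt_eqF.
    apply: divr_ge0; last by apply: mulr_ge0; lra.
    have : n * (x0 i - m0) >= - M.
      have -> : x0 i - m0 = (x0 i - xl) - (m0 - xl) by ring.
      rewrite mx mulrBr mulrCA mulfV ?gt_eqF // mulr1.
      have : 0 <= n * (x0 i - xl) by apply: mulr_ge0; lra.
      lra.
    lra.
  rewrite -subr_ge0.
  have -> : 1 - (n^-1 + (x0 i - m0) / K) = ((n - 1) * K - n * (x0 i - m0)) / (n * K).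
    by field; rewrite !gt_eqF.
  apply: divr_ge0; last by apply: mulr_ge0; lra.
  have : n * (x0 i - m0) <= (n - 1) * M.
    have -> : x0 i - m0 = (x0 i - xl) - (m0 - xl) by ring.
    rewrite mx mulrBr mulrCA mulfV ?gt_eqF // mulr1.
    have : n * (x0 i - xl) <= n * M by rewrite ler_pM2l.
    lra.
  have : (n - 1) * M <= (n - 1) * K by rewrite ler_pM2l //; lra.
  lra.
set rho := n / q.
pose A i := m0 - be i * m0 * rho.
pose B i := d i + be i * m0 * rho.
pose y (i : nat) (t : R) := A i * E1 t + B i * E2 t.
have sumA : \sum_(i < p.+2) A i = n * m0.
  rewrite /A sumrB sumr_const card_ord -mulr_suml -mulr_suml sumbe -mulr_natl -/n.
  ring.
have sumB : \sum_(i < p.+2) B i = 0.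
  rewrite /B big_split /= sumd -mulr_suml -mulr_suml sumbe; ring.
have avgy : forall s, avg p.+2 (fun j => y j s) = m0 * E1 s.
  move=> s; rewrite /avg /y big_split /= -!mulr_suml sumA sumB -/n.
  by field; rewrite gt_eqF.
exists b; exists y; split => //; split; last first.
  rewrite /cost.
  have yT : forall i, (i < p.+2)%N -> y i T = m0 * E1 T.
    move=> i _; rewrite /y /A /B /be /K E12 /rho -/X.
    by field; rewrite hn1 hn2 !gt_eqF //; lra.
  have -> : \sum_(i < p.+2) y i T ^+ 2 = \sum_(i < p.+2) (m0 * E1 T) ^+ 2.
    by apply: eq_bigr => i _; rewrite yT.
  by rewrite sumr_const card_ord -[X in _ * X]mulr_natl mulKf // -/n gt_eqF.
move=> i hi t /andP[t0 tT].
set P := - A i + (1 - n^-1 - be i) * m0.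
set Qc := - B i.
have rhsE : rhs p.+2 b y i = fun s => P * E1 s + Qc * E2 s.
  apply/funext => s; rewrite /rhs avgy /b /y /P /Qc; ring.
rewrite rhsE.
have [i1 I1] := RI_scale P (expk_int k1 t0).
have [i2 I2] := RI_scale Qc (expk_int (-1) t0).
have [i3 I3] := RI_add i1 i2.
split; first exact: i3.
rewrite I3 I1 I2 !expk_RI //; last first.
  by rewrite oppr_eq0 invr_eq0 gt_eqF.
rewrite /y /P /Qc /A /B /d /E1 /E2 /k1 /rho nq.
field; rewrite ?gt_eqF //; lra.
Qed.
Lemma sq_aux (V zz ee : R) : V + zz ^+ 2 <= ee ^+ 2 -> 0 <= V -> ee <= zz -> 0 < ee -> zz = ee /\ V = 0.
Proof.
move=> h1 h2 h3 h4. have h5 : zz <= ee by nra.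
have E : zz = ee by apply/eqP; rewrite eq_le h5 h3.
split => //; rewrite E in h1; apply/eqP; rewrite eq_le h2 andbT. lra. Qed.
End S.
End Aux.
Import Aux.

Import numFieldNormedType.Exports.
Local Open Scope classical_set_scope.
Local Open Scope ring_scope.
Local Notation mu := (@lebesgue_measure _).

Theorem theorem6 (R : realType) (N : nat) (T : R) (x0 : nat -> R)
  (a : nat -> R -> R) (x : nat -> R -> R) :
  (2 <= N)%N -> 0 < T ->
  0 < avg N x0 ->
  (forall i j, (i <= j)%N -> (j < N)%N -> x0 j <= x0 i) ->
  tN N x0 <= T ->
  optimal N T x0 a x ->
  full_saturation N T a /\ (forall i, (i < N)%N -> x i T = avg N (fun j => x j T)).
Proof.
case: N => [|[|p]] // _ T0 m0pos ord htN [adm [traj opt]].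
have [b [y [admb [trajy costy]]]] := explicit T0 m0pos ord htN.
have costx := opt b y admb trajy; rewrite costy in costx.
set n : R := (p.+2)%:R.
have n0 : 0 < n by rewrite /n ltr0n.
set m0 := avg p.+2 x0.
set k1 : R := - n^-1.
pose e (t : R) : R := m0 * expR (k1 * t).
pose z (t : R) : R := avg p.+2 (fun j => x j t).
pose c (t : R) : R := n^-1 * \sum_(i < p.+2) a i t.
pose F (s : R) : R := n^-1 * \sum_(i < p.+2) rhs p.+2 a x i s.
have FE : forall s, F s = - c s * z s.
  move=> s; rewrite /F /c /z /rhs /avg -/n big_split /= -mulr_suml sumrB sumr_const card_ord.
  rewrite -mulr_natl -/n sumrN.
  move: (\sum_(i < p.+2) x i s) (\sum_(i < p.+2) a i s) => S1 S2.
  by field; rewrite gt_eqF.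
have intF : forall t, 0 <= t <= T ->
    mu.-integrable `[0, t] (EFin \o F) /\
    z t = m0 + \int[mu]_(s in `[0, t]) F s.
  move=> t tT.
  have hi : forall i, (i < p.+2)%N ->
      mu.-integrable `[0, t] (EFin \o rhs p.+2 a x i) by move=> i hi; case: (traj i hi t tT).
  have [iS IS] := RI_sum hi.
  have [iF IF] := RI_scale (n^-1) iS.
  split; first exact: iF.
  rewrite IF IS /z /avg -/n.
  rewrite (eq_bigr (fun i : 'I_p.+2 => x0 i + \int[mu]_(s in `[0, t]) rhs p.+2 a x i s)); last first.
    by move=> i _; case: (traj i (ltn_ord i) t tT).
  by rewrite big_split /= mulrDr.
have k10 : k1 != 0 by rewrite /k1 oppr_eq0 invr_eq0 gt_eqF.
pose psi (s : R) : R := (k1 * m0) * expR (k1 * s).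
have intpsi : forall t, 0 <= t ->
    mu.-integrable `[0, t] (EFin \o psi) /\ e t = m0 + \int[mu]_(s in `[0, t]) psi s.
  move=> t t0; have [i1 I1] := RI_scale (k1 * m0) (expk_int k1 t0).
  split; first exact: i1.
  by rewrite I1 expk_RI // /e; field.
have bnda : forall s, 0 <= s <= T -> 0 <= c s <= n^-1.
  move=> s sT; have [h1 h2] := (adm.2 s sT); apply/andP; split.
    apply: mulr_ge0; first by rewrite invr_ge0 ltW.
    by apply: sumr_ge0 => i _; case/andP: (h1 i (ltn_ord i)).
  by rewrite /c ler_piMr // invr_ge0 ltW.
have epos : forall s, 0 < e s by move=> s; rewrite /e mulr_gt0 // expR_gt0.
have gE : forall lam t, 0 <= t <= T ->
    mu.-integrable `[0, t] (EFin \o (fun s => F s + (- lam) * psi s)) /\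
    (m0 - lam * m0) + \int[mu]_(s in `[0, t]) (F s + (- lam) * psi s) = z t - lam * e t.
  move=> lam t /andP[t0 tT].
  have [iF ZE] := intF t (introT andP (conj t0 tT)).
  have [ip EE] := intpsi t t0.
  have [i2 I2] := RI_scale (- lam) ip.
  have [i3 I3] := RI_add iF i2.
  split; first exact: i3.
  rewrite I3 I2 ZE EE; ring.
have cmp : forall lam, 0 <= lam -> forall s0, 0 <= s0 -> s0 <= T -> lam * e s0 <= z s0 ->
    forall t, s0 <= t <= T -> lam * e t <= z t.
  move=> lam lam0 s0 s00 s0T hs0 t /andP[s0t tT].
  have T0' : 0 <= T by apply: le_trans s0T.
  have [iT _] := gE lam T (introT andP (conj T0' (lexx T))).
  have := @key R (fun s => F s + (- lam) * psi s) c T (m0 - lam * m0) s0 iT.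
  rewrite -subr_ge0 -(gE lam t _).2; last by rewrite (le_trans s00 s0t) tT.
  apply => //.
  - by move=> s sT; case/andP: (bnda s sT).
  - move=> s sT; rewrite (gE lam s sT).2 FE.
    have := bnda s sT; have := epos s.
    rewrite /psi /e.
    move: (c s) (z s) (expR (k1 * s)) => cs zs ex e0 /andP[c0 c1].
    have : 0 <= lam * (m0 * ex) * (n^-1 - cs).
      by apply: mulr_ge0; [apply: mulr_ge0 => //; apply: ltW|rewrite subr_ge0].
    rewrite /k1 => h; rewrite -subr_ge0; apply: (le_trans h); rewrite le_eqVlt; apply/orP; left; apply/eqP; ring.
  - by rewrite (gE lam s0 _).2 ?subr_ge0 // s00 s0T.
  - by rewrite s0t tT.
have T0w : 0 <= T by apply: ltW.
have z0 : z 0 = m0.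
  by rewrite (intF 0 _).2 ?lexx ?T0w // set_itv1 Rintegral_set1 addr0.
have e0v : e 0 = m0 by rewrite /e mulr0 expR0 mulr1.
have zeT : forall t, 0 <= t <= T -> e t <= z t.
  move=> u /andP[u0 uT].
  have := cmp 1 ler01 0 (lexx 0) T0w; rewrite !mul1r e0v z0 => /(_ (lexx _) u).
  by rewrite mul1r; apply; rewrite u0 uT.
have Sx : \sum_(i < p.+2) x i T = n * z T.
  by rewrite /z /avg -/n mulrA mulfV ?gt_eqF // mul1r.
have var : cost p.+2 (fun i => x i T) = n^-1 * \sum_(i < p.+2) (x i T - z T) ^+ 2 + z T ^+ 2.
  rewrite /cost -/n.
  have -> : \sum_(i < p.+2) (x i T - z T) ^+ 2 =
      \sum_(i < p.+2) x i T ^+ 2 - (2 * z T) * (n * z T) + n * z T ^+ 2.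
    rewrite -Sx (eq_bigr (fun i : 'I_p.+2 => x i T ^+ 2 - (2 * z T) * x i T + z T ^+ 2)); last first.
      by move=> i _; ring.
    rewrite big_split /= sumrB -mulr_sumr sumr_const card_ord.
    by congr (_ + _); rewrite mulr_natl.
  move: (\sum_(i < p.+2) x i T ^+ 2) => S2.
  by field; rewrite gt_eqF.
have V0 : 0 <= n^-1 * \sum_(i < p.+2) (x i T - z T) ^+ 2.
  by apply: mulr_ge0; [rewrite invr_ge0 ltW|apply: sumr_ge0 => i _; exact: sqr_ge0].
have costx' : cost p.+2 (fun i => x i T) <= e T ^+ 2 by exact: costx.
rewrite var in costx'.
have zeTT := zeT T (introT andP (conj T0w (lexx T))).
have eT0 := epos T.
have [zTe V00] : z T = e T /\ n^-1 * \sum_(i < p.+2) (x i T - z T) ^+ 2 = 0.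
  exact: sq_aux costx' V0 zeTT eT0.
split; last first.
  move=> i hi.
  have S0 : \sum_(i < p.+2) (x i T - z T) ^+ 2 = 0.
    by move: V00 => /eqP; rewrite mulf_eq0 invr_eq0 gt_eqF //= => /eqP.
  have H0 : forall j : 'I_p.+2, predT j -> 0 <= (x j T - z T) ^+ 2 by move=> j _; exact: sqr_ge0.
  have := psumr_eq0P H0 S0 (i := Ordinal hi) isT.
  by move=> /eqP; rewrite sqrf_eq0 subr_eq0 => /eqP.
have zs : forall s, 0 <= s <= T -> z s = e s.
  move=> s sT; apply/eqP; rewrite eq_le (zeT s sT) andbT leNgt; apply/negP => lt.
  have es0 := epos s.
  set lam := z s / e s.
  have lam1 : 1 < lam by rewrite /lam ltr_pdivlMr // mul1r.
  have hl : lam * e s <= z s by rewrite /lam divfK // gt_eqF.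
  case/andP: sT => s0 sT.
  have := cmp lam (ltW (lt_trans ltr01 lam1)) s s0 sT hl T; rewrite sT lexx zTe.
  move=> /(_ isT); rewrite -[X in _ <= X](mul1r (e T)) ler_pM2r // => h.
  by move: h; rewrite leNgt lam1.
have [i1 EE1] := gE 1 T (introT andP (conj T0w (lexx T))).
pose h (s : R) : R := (n^-1 - c s) * e s.
have hphi : {in [set` `[0, T]], (fun s => F s + (-1) * psi s) =1 h}.
  move=> s; rewrite inE /= in_itv /= => sT.
  by rewrite FE zs // /psi /h /e /k1; ring.
have RIh : \int[mu]_(s in `[0, T]) h s = 0.
  rewrite (_ : \int[mu]_(s in `[0, T]) h s = \int[mu]_(s in `[0, T]) (F s + -1 * psi s)).
    by move: EE1; rewrite zTe; lra.
  by apply/esym/eq_Rintegral.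
have ih : mu.-integrable `[0, T] (EFin \o h).
  move: i1; apply: eq_integrable => // s hs /=; rewrite hphi //.
have h0 : forall s, 0 <= s <= T -> 0 <= h s.
  move=> s sT; rewrite /h; apply: mulr_ge0; last exact: ltW.
  by case/andP: (bnda s sT) => _; rewrite subr_ge0.
have fin := integrable_fin_num _ ih.
have := fin (measurable_itv _).
move: RIh; rewrite /Rintegral => RIh Ih.
have Ih0 := fineK Ih; rewrite RIh in Ih0.
rewrite /full_saturation.
apply: (filterS _ ((ae_eq_integral_abs mu _ (measurable_int mu ih)).1 _)).
  move=> s Hs sT.
  have : h s = 0.
    have hs : [set` `[0, T]] s by rewrite /= in_itv /= sT.
    by case: (Hs hs).
  rewrite /h => /eqP; rewrite mulf_eq0 (gt_eqF (epos s)) orbF subr_eq0 => /eqP E.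
  rewrite /c in E; have := congr1 (fun v => n * v) E => /=.
  by rewrite mulfV ?gt_eqF // mulrA mulfV ?gt_eqF // mul1r => <-.
- exact: measurable_itv.
- apply: (eq_trans _ (esym Ih0)); apply: eq_integral => s hs.
  apply: gee0_abs; rewrite /= lee_fin; apply: h0.
  by move: hs; rewrite inE /= in_itv.
Qed.
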